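(* Let $i\ge0$, $l\ge1$, $j_1,\ldots,j_l\ge0$ and $k_1,\ldots,k_l$ be integers. Then $$b_{i,j_1+\cdots+j_l,k_1+\cdots+k_l}=\sum\binom{i}{i_1,\ldots,i_l}\prod_{r=1}^{l}b_{i_r,j_r,k_r},$$ where the sum is over all tuples of integers $i_1\ge0,\ldots,i_l\ge0$ with $i_1+\cdots+i_l=i$.
   Context: For integers $i\ge0$, $j\ge0$ and real $k$, $b_{i,j,k}=\sum_{r=0}^{j}\binom{j}{r}(-1)^{j-r}(r+k)^i$, with the convention $0^0=1$. $\binom{i}{i_1,\ldots,i_l}=\frac{i!}{i_1!\cdots i_l!}$ is the multinomial coefficient. *)

(* Defs.v *)
From HB Require Import structures.
From mathcomp Require Import all_boot all_order all_algebra.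
Set Implicit Arguments. Unset Strict Implicit. Unset Printing Implicit Defensive.
Import Order.TTheory GRing.Theory Num.Theory.
Local Open Scope ring_scope.

(* b_{i,j,k} = sum_{r=0}^{j} C(j,r) (-1)^(j-r) (r+k)^i, over the integers.
   The power x ^+ 0 = 1 implements the convention 0^0 = 1. *)
Definition bcoef (i j : nat) (k : int) : int :=
  \sum_(r < j.+1) ('C(j, r))%:Z * (-1) ^+ (j - r) * ((r%:Z + k) ^+ i).

Definition multinom (i : nat) (s : seq nat) : nat :=
  (i`! %/ \prod_(x <- s) x`!)%N.

(* Main.v *)
Require Import Defs.
From HB Require Import structures.
From mathcomp Require Import all_boot all_order all_algebra.
From mathcomp Require Import ring.
Import Order.TTheory GRing.Theory Num.Theory.
Local Open Scope ring_scope.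

Lemma bcoef0 n k : bcoef n 0 k = k ^+ n.
Proof. by rewrite /bcoef big_ord1 bin0 subnn expr0 !mul1r add0r. Qed.

Lemma bcoefS n m k : bcoef n m.+1 k = bcoef n m (k + 1) - bcoef n m k.
Proof.
rewrite /bcoef big_ord_recl /=.
have -> : \sum_(i < m.+1) ('C(m.+1, bump 0 i))%:Z * (-1) ^+ (m.+1 - bump 0 i) * ((bump 0 i)%:Z + k) ^+ n
   = \sum_(i < m.+1) ('C(m, i.+1))%:Z * (-1) ^+ (m - i) * ((i%:Z + (k+1)) ^+ n) +
     \sum_(i < m.+1) ('C(m, i))%:Z * (-1) ^+ (m - i) * ((i%:Z + (k+1)) ^+ n).
  rewrite -big_split; apply: eq_bigr => r _; rewrite /bump /= add1n subSS binS PoszD -!mulrDl.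
  by rewrite -addn1 PoszD -addrA [1 + k]addrC.
rewrite addrA [RHS]addrC; congr (_ + _).
rewrite [in RHS](big_ord_recl m) big_ord_recr /=.
have -> : ('C(m, m.+1))%:Z = 0 by rewrite bin_small.
rewrite mul0r mul0r addr0 opprD addrC [RHS]addrC; congr (_ + _).
  rewrite -sumrN; apply: eq_bigr => r _.
  rewrite /bump /= add1n -mulNr -mulrN; congr (_ * _ * _).
    have hr : (r < m)%N := ltn_ord r.
    by rewrite -subnSK // exprS mulN1r.
  by rewrite -addn1 PoszD -addrA [1 + k]addrC.
by rewrite !bin0 !subn0 exprS mulN1r mulrN !mulNr.
Qed.

Lemma bin_id n J K j k : bcoef n (J + j) (K + k) =
  \sum_(a < n.+1) ('C(n,a))%:Z * bcoef a J K * bcoef (n - a) j k.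
Proof.
elim: j k => [|j IH] k.
  rewrite addn0 /bcoef.
  under eq_bigr => s _ do rewrite addrA [_ + k]addrC exprDn mulr_sumr.
  rewrite exchange_big /=; apply: eq_bigr => a _.
  rewrite big_ord1 bin0 subnn expr0 mulr1 add0r mulr_sumr mulr_suml.
  apply: eq_bigr => s _; rewrite -mulr_natl; ring.
rewrite addnS !bcoefS -addrA IH IH -sumrB; apply: eq_bigr => a _.
by rewrite bcoefS mulrBr.
Qed.

Definition bq a j k : rat := (bcoef a j k)%:~R.
Definition Bp i j k : {poly rat} := \poly_(a < i.+1) (bq a j k / (a`!)%:R).

Lemma intr_natE n : ((n%:Z)%:~R : rat) = n%:R.
Proof. by []. Qed.

Lemma fact_neq0 n : (n`!%:R : rat) != 0.
Proof. by rewrite pnatr_eq0 -lt0n fact_gt0. Qed.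

Lemma P2 i l (j : 'I_l -> nat) (k : 'I_l -> int) n : (n <= i)%N ->
  (\prod_(r < l) Bp i (j r) (k r))`_n = bq n (\sum_(r < l) j r) (\sum_(r < l) k r) / n`!%:R.
Proof.
elim: l j k n => [|l IH] j k n hn.
  rewrite !big_ord0 coef1 /bq bcoef0.
  by case: n hn => [|n] _ //=; rewrite ?expr0 ?divr1 // expr0n mul0r.
rewrite big_ord_recr coefM /= [X in bq _ X _]big_ord_recr [X in bq _ _ X]big_ord_recr /=.
rewrite /bq bin_id rmorph_sum mulr_suml.
apply: eq_bigr => a _.
have ha : (a <= n)%N by rewrite -ltnS.
rewrite IH; last by apply: leq_trans hn.
rewrite coef_poly ifT; last by rewrite ltnS (leq_trans (leq_subr _ _) hn).
rewrite !rmorphM /= intr_natE.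
have h := bin_fact ha.
have -> : (n`!%:R : rat) = 'C(n,a)%:R * (a`!%:R * (n - a)`!%:R) by rewrite -!natrM h.
have := fact_neq0 a; have := fact_neq0 (n - a).
move=> h1 h2; field.
by rewrite h1 h2 pnatr_eq0 -lt0n bin_gt0 ha.
Qed.

Lemma P1 i l (j : 'I_l -> nat) (k : 'I_l -> int) :
  (\prod_(r < l) Bp i (j r) (k r))`_i =
  \sum_(t : {ffun 'I_l -> 'I_i.+1} | (\sum_(r < l) (t r : nat))%N == i)
     \prod_(r < l) (bq (t r) (j r) (k r) / (t r)`!%:R).
Proof.
have -> : \prod_(r < l) Bp i (j r) (k r) =
   \prod_(r < l) \sum_(a < i.+1) (bq a (j r) (k r) / a`!%:R)%:P * 'X^a.
  by apply: eq_bigr => r _; rewrite /Bp poly_def; apply: eq_bigr => a _; rewrite mul_polyC.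
rewrite bigA_distr_bigA coef_sum /= [RHS]big_mkcond /=; apply: eq_bigr => t _.
rewrite big_split /= -rmorph_prod prodrXr coefCM coefXn eq_sym.
by case: eqP => _; rewrite ?mulr1 ?mulr0.
Qed.

Lemma fact_prod_dvd l (f : 'I_l -> nat) :
  (\prod_(r < l) (f r)`! %| (\sum_(r < l) f r)`!)%N.
Proof.
elim: l f => [|l IH] f; first by rewrite !big_ord0.
rewrite !big_ord_recr /=.
set S := (\sum_(i < l) _)%N; set x := f ord_max.
apply: (@dvdn_trans (S`! * x`!)%N); first by apply: dvdn_mul => //; apply: IH.
have := bin_fact (leq_addl S x); rewrite addnK => <-.
by rewrite [(x`! * _)%N]mulnC dvdn_mull.
Qed.

Lemma multinomE i l (t : 'I_l -> nat) : (\sum_(r < l) t r)%N = i ->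
  ((multinom i [seq t r | r <- enum 'I_l])%:R : rat) =
  i`!%:R / (\prod_(r < l) (t r)`!)%:R.
Proof.
move=> ht; rewrite /multinom big_map big_enum /=.
have hd := @fact_prod_dvd _ t; rewrite ht in hd.
have hP : ((\prod_(r < l) (t r)`!)%:R : rat) != 0.
  by rewrite pnatr_eq0 -lt0n prodn_gt0 // => r; apply: fact_gt0.
by rewrite -{2}(divnK hd) natrM mulfK.
Qed.

Theorem mainTheorem18 (i l : nat) (hl : (1 <= l)%N)
  (j : 'I_l -> nat) (k : 'I_l -> int) :
  bcoef i (\sum_(r < l) j r)%N (\sum_(r < l) k r) =
  \sum_(t : {ffun 'I_l -> 'I_i.+1} | (\sum_(r < l) (t r : nat))%N == i)
     (multinom i [seq (t r : nat) | r <- enum 'I_l])%:Z *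
     \prod_(r < l) bcoef (t r) (j r) (k r).
Proof.
apply: (@intr_inj rat); rewrite -/(bq i _ _).
have -> : bq i (\sum_(r < l) j r)%N (\sum_(r < l) k r) =
   i`!%:R * (bq i (\sum_(r < l) j r)%N (\sum_(r < l) k r) / i`!%:R).
  by have := fact_neq0 i => h; field.
rewrite -(@P2 i l j k i (leqnn i)) P1 mulr_sumr rmorph_sum; apply: eq_bigr => t /eqP ht.
rewrite rmorphM rmorph_prod /= intr_natE (@multinomE i l (fun r => t r) ht) prodf_div.
have hP : ((\prod_(r < l) (t r)`!)%:R : rat) != 0.
  by rewrite pnatr_eq0 -lt0n prodn_gt0 // => r; apply: fact_gt0.
have e : \prod_(r < l) ((t r)`!%:R : rat) = (\prod_(r < l) (t r)`!)%:R by rewrite natr_prod.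
rewrite /bq e; field.
by rewrite hP.
Qed.
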